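(* If $\mathcal F_1$ and $\mathcal F_2$ are distributive forest algebras (finite or infinite), then $\mathcal F_1\wr\mathcal F_2$ is 2-distributive.
   Context: A forest algebra is a pair $(H,V)$ where $H$ is a monoid written additively, $V$ is a monoid written multiplicatively, and $V$ acts faithfully on $H$. For each $h$ there is $I_h\in V$ with $I_h h'=h+h'$, and each $h$ is of the form $v\cdot 0_H$. All forest algebras are horizontally commutative and idempotent ($h_1+h_2=h_2+h_1$, $h+h=h$). Morphisms preserve the monoid operations, the action and $h\mapsto I_h$. The free forest algebra $\Sigma^\Delta=(H_\Sigma,V_\Sigma)$ has as forest part the finite sets of unordered trees $\alpha[C]$ (with $\alpha\in\Sigma$ and $C$ a finite set of trees), under union. Its contexts are forests with one leaf replaced by a hole, acting by substitution. $\pi(f)$ is the prefix-closed set of root-starting (not necessarily maximal) label paths of a forest $f$. $(H,V)$ is distributive if $v(h_1+h_2)=vh_1+vh_2$ for all $v,h_1,h_2$. It is 2-distributive if for every finite alphabet $\Sigma$, every morphism $\phi:\Sigma^\Delta\to(H,V)$, every context $v$, and all forests $f_1,f_2$ with $\pi(f_1)=\pi(f_2)$, we have $\phi(v(f_1+f_2))=\phi(vf_1+vf_2)$. Wreath product: $(H_1,V_1)\wr(H_2,V_2)=(H_1\times H_2,\ V_1^{H_2}\times V_2)$. The action is $(f,v)(h_1,h_2)=(f(h_2)h_1,\ vh_2)$. Multiplication is $(f,v)(f',v')=(f'',vv')$ with $f''(h)=f(v'h)\cdot f'(h)$. $H_1\times H_2$ carries the direct product structure. *)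

(* Defs.v *)
From mathcomp Require Import all_boot.

Record FAops := {
  fH : Type;
  fV : Type;
  fzero : fH;
  fadd : fH -> fH -> fH;
  fone : fV;
  fmul : fV -> fV -> fV;
  fact : fV -> fH -> fH;
  fI : fH -> fV
}.

(* The axioms of a (horizontally commutative and idempotent) forest algebra. *)
Definition forest_algebra (F : FAops) : Prop :=
  (forall a b c : fH F, fadd F a (fadd F b c) = fadd F (fadd F a b) c) /\
  (forall a : fH F, fadd F (fzero F) a = a) /\
  (forall a : fH F, fadd F a (fzero F) = a) /\
  (forall u v w : fV F, fmul F u (fmul F v w) = fmul F (fmul F u v) w) /\
  (forall v : fV F, fmul F (fone F) v = v) /\
  (forall v : fV F, fmul F v (fone F) = v) /\
  (forall (v w : fV F) (h : fH F), fact F (fmul F v w) h = fact F v (fact F w h)) /\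
  (forall h : fH F, fact F (fone F) h = h) /\
  (forall v w : fV F, (forall h, fact F v h = fact F w h) -> v = w) /\
  (forall h h' : fH F, fact F (fI F h) h' = fadd F h h') /\
  (forall h : fH F, exists v, h = fact F v (fzero F)) /\
  (forall a b : fH F, fadd F a b = fadd F b a) /\
  (forall a : fH F, fadd F a a = a).

Definition distributive (F : FAops) : Prop :=
  forall (v : fV F) (h1 h2 : fH F),
    fact F v (fadd F h1 h2) = fadd F (fact F v h1) (fact F v h2).

(* Representatives: ordered rose trees / lists; forests are identified *)
(* as finite sets of unordered trees via [feq].                        *)

Set Implicit Arguments.
Unset Strict Implicit.
Unset Printing Implicit Defensive.

Inductive tree (Sigma : Type) : Type :=
  Node : Sigma -> seq (tree Sigma) -> tree Sigma.

Definition forest (Sigma : Type) := seq (tree Sigma).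

Section Free.
Variable Sigma : eqType.

(* equality of trees as hereditarily finite labelled sets:
   alpha[C] = beta[D] iff alpha = beta and C = D as sets of trees *)
Fixpoint teq (t u : tree Sigma) {struct t} : bool :=
  match t, u with
  | Node a ts, Node b us =>
      (a == b)
      && all (fun t' => has (teq t') us) ts
      && all (fun u' => has (fun t' => teq t' u') ts) us
  end.

Definition feq (f g : forest Sigma) : bool :=
  all (fun t => has (teq t) g) f && all (fun u => has (fun t => teq t u) f) g.

(* Contexts: CHole f = f + [], CNode f a c = f + a[c]. *)
Inductive ctx : Type :=
  | CHole : forest Sigma -> ctx
  | CNode : forest Sigma -> Sigma -> ctx -> ctx.

Fixpoint subst (v : ctx) (g : forest Sigma) : forest Sigma :=
  match v with
  | CHole f => f ++ g
  | CNode f a c => f ++ [:: Node a (subst c g)]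
  end.

Definition cprepend (f : forest Sigma) (w : ctx) : ctx :=
  match w with
  | CHole f' => CHole (f ++ f')
  | CNode f' a c => CNode (f ++ f') a c
  end.

Fixpoint comp (v w : ctx) : ctx :=
  match v with
  | CHole f => cprepend f w
  | CNode f a c => CNode f a (comp c w)
  end.

Definition cid : ctx := CHole [::].

(* equality of contexts (the free forest algebra acts faithfully) *)
Definition ceq (v w : ctx) : Prop :=
  forall g, feq (subst v g) (subst w g).

(* pi(f): root-starting label paths of f (prefix closed) *)
Fixpoint inpi (f : forest Sigma) (p : seq Sigma) {struct p} : bool :=
  match p with
  | [::] => true
  | a :: p' => has (fun t => match t with Node b ts => (b == a) && inpi ts p' end) f
  end.

Definition pi_eq (f1 f2 : forest Sigma) : Prop :=
  forall p, inpi f1 p = inpi f2 p.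

End Free.

Arguments CHole {Sigma}.
Arguments CNode {Sigma}.
Arguments cid {Sigma}.

(* A morphism from the free forest algebra over Sigma to F, given by its
   action on representatives; it must be well defined on the free algebra
   (invariant under [feq]/[ceq]) and preserve all the structure. *)
Definition free_morphism (Sigma : eqType) (F : FAops)
    (phiH : forest Sigma -> fH F) (phiV : ctx Sigma -> fV F) : Prop :=
  (forall f g, feq f g -> phiH f = phiH g) /\
  (forall v w, ceq v w -> phiV v = phiV w) /\
  phiH [::] = fzero F /\
  (forall f g, phiH (f ++ g) = fadd F (phiH f) (phiH g)) /\
  phiV cid = fone F /\
  (forall v w, phiV (comp v w) = fmul F (phiV v) (phiV w)) /\
  (forall v f, phiH (subst v f) = fact F (phiV v) (phiH f)) /\
  (forall f, phiV (CHole f) = fI F (phiH f)).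

Definition two_distributive (F : FAops) : Prop :=
  forall (Sigma : finType) (phiH : forest Sigma -> fH F) (phiV : ctx Sigma -> fV F),
    free_morphism phiH phiV ->
    forall (v : ctx Sigma) (f1 f2 : forest Sigma),
      pi_eq f1 f2 ->
      phiH (subst v (f1 ++ f2)) = phiH (subst v f1 ++ subst v f2).

Definition wreath (F1 F2 : FAops) : FAops := {|
  fH := (fH F1 * fH F2)%type;
  fV := ((fH F2 -> fV F1) * fV F2)%type;
  fzero := (fzero F1, fzero F2);
  fadd := fun a b => (fadd F1 a.1 b.1, fadd F2 a.2 b.2);
  fone := (fun _ => fone F1, fone F2);
  fmul := fun x y => (fun h => fmul F1 (x.1 (fact F2 y.2 h)) (y.1 h), fmul F2 x.2 y.2);
  fact := fun x h => (fact F1 (x.1 h.2) h.1, fact F2 x.2 h.2);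
  fI := fun h => (fun _ => fI F1 h.1, fI F2 h.2)
|}.

(* Main.v *)
Require Import Defs.
From mathcomp Require Import all_boot.

Set Implicit Arguments.
Unset Strict Implicit.

Section Abstract.
Variable Sigma : eqType.
Variable H : Type.
Variable add : H -> H -> H.
Variable zero : H.
Variable A : Sigma -> H -> H.
Variable phi : forest Sigma -> H.
Hypothesis addA : forall a b c, add a (add b c) = add (add a b) c.
Hypothesis addC : forall a b, add a b = add b a.
Hypothesis addI : forall a, add a a = a.
Hypothesis add0 : forall a, add a zero = a.
Hypothesis Adist : forall s x y, A s (add x y) = add (A s x) (A s y).
Hypothesis phi0 : phi [::] = zero.
Hypothesis phicat : forall f g, phi (f ++ g) = add (phi f) (phi g).
Hypothesis phinode : forall a ts, phi [:: Node a ts] = A a (phi ts).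

Definition le x y := add x y = y.

Lemma le_refl x : le x x. Proof. exact: addI. Qed.
Lemma le_trans x y z : le x y -> le y z -> le x z.
Proof. rewrite /le => h1 h2. by rewrite -h2 addA h1. Qed.
Lemma le_addr x y z : le x y -> le x (add z y).
Proof. rewrite /le => h. by rewrite addA (addC x z) -addA h. Qed.
Lemma le_addl x y : le x (add x y).
Proof. by rewrite /le addA addI. Qed.
Lemma le_join x y z : le x z -> le y z -> le (add x y) z.
Proof. rewrite /le => h1 h2. by rewrite -addA h2 h1. Qed.
Lemma le_A s x y : le x y -> le (A s x) (A s y).
Proof. rewrite /le => h. by rewrite -Adist h. Qed.
Lemma le_antisym x y : le x y -> le y x -> x = y.
Proof. rewrite /le => h1 h2. by rewrite -h1 -{1}h2 addC. Qed.

Lemma inpi_cat (f g : forest Sigma) p : inpi (f ++ g) p = inpi f p || inpi g p.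
Proof. case: p => [|a p] //=. by rewrite has_cat. Qed.

Fixpoint sub (a : Sigma) (g : forest Sigma) : forest Sigma :=
  match g with
  | [::] => [::]
  | Node b us :: g' => if b == a then us ++ sub a g' else sub a g'
  end.

Lemma inpi_sub a g b p : inpi (sub a g) (b :: p) = inpi g (a :: b :: p).
Proof.
elim: g => [|[c us] g IH] //.
have -> : inpi (Node c us :: g) [:: a, b & p] =
   ((c == a) && inpi us (b :: p)) || inpi g [:: a, b & p] by [].
rewrite -IH /sub -/sub.
by case: (c == a); rewrite ?inpi_cat.
Qed.

Lemma sub_nil a g : ~~ inpi g [:: a] -> sub a g = [::].
Proof.
elim: g => [|[c us] g IH] //=.
case: (c == a) => //=.
Qed.

Lemma phi_cons t f : phi (t :: f) = add (phi [:: t]) (phi f).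
Proof. by rewrite -phicat. Qed.

Lemma le_sub a g : inpi g [:: a] -> le (A a (phi (sub a g))) (phi g).
Proof.
elim: g => [|[c us] g IH] //=.
rewrite phi_cons phinode.
case: eqP => [->|ne] /=.
- move=> _. case hg: (inpi g [:: a]).
  + rewrite phicat Adist. apply: le_join; first exact: le_addl.
    apply: le_addr. exact: IH.
  + rewrite sub_nil ?hg // cats0. exact: le_addl.
- move=> hg. apply: le_addr. exact: IH.
Qed.

Fixpoint Pall (P : tree Sigma -> Prop) (ts : seq (tree Sigma)) : Prop :=
  match ts with [::] => True | t :: ts' => P t /\ Pall P ts' end.

Fixpoint tree_ind' (P : tree Sigma -> Prop)
  (HN : forall a ts, Pall P ts -> P (Node a ts)) (t : tree Sigma) : P t :=
  match t with
  | Node a ts => HN a ts ((fix go (ts : seq (tree Sigma)) : Pall P ts :=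
      match ts with [::] => I | t :: ts' => conj (tree_ind' HN t) (go ts') end) ts)
  end.

Definition Pt (t : tree Sigma) := forall g,
  (forall p, inpi [:: t] p -> inpi g p) -> le (phi [:: t]) (phi g).

Lemma forest_le ts : Pall Pt ts -> forall g,
  (forall p, inpi ts p -> inpi g p) -> le (phi ts) (phi g).
Proof.
elim: ts => [|t ts IH] /=.
- move=> _ g _. rewrite phi0 /le addC. exact: add0.
- move=> [Ht Hts] g hp. rewrite phi_cons. apply: le_join.
  + apply: Ht => p hq. apply: hp. by rewrite -cat1s inpi_cat hq.
  + apply: IH => // p hq. apply: hp. by rewrite -cat1s inpi_cat hq orbT.
Qed.

Lemma tree_le t : Pt t.
Proof.
elim/tree_ind': t => a ts Hts g hp.
have ha : inpi g [:: a] by apply: (hp [:: a]); rewrite /= eqxx.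
rewrite phinode. apply: le_trans (le_sub ha).
apply: le_A. apply: forest_le => // -[|b p] // hq.
rewrite inpi_sub. apply: hp.
change (((a == a) && inpi ts (b :: p)) || false).
by rewrite eqxx hq.
Qed.

Lemma pi_phi f g : pi_eq f g -> phi f = phi g.
Proof.
move=> e. have Hf : forall ts, Pall Pt ts.
  by elim=> [|t ts IH] //=; split => //; exact: tree_le.
apply: le_antisym; apply: forest_le => // p; by rewrite e.
Qed.

End Abstract.

Theorem mainTheorem3 (F1 F2 : FAops) :
  forest_algebra F1 -> distributive F1 ->
  forest_algebra F2 -> distributive F2 ->
  two_distributive (wreath F1 F2).
Proof.
move=> HF1 HD1 HF2 HD2 Sigma phiH phiV Hm v f1 f2 Hpi.
have Hm' := Hm.
case: Hm' => _ [_ [H0 [Hcat [_ [_ [Hsub _]]]]]].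
case: HF2 => addA [_ [add0 [_ [_ [_ [_ [_ [_ [_ [_ [addC addI]]]]]]]]]]].
have e : (phiH f2).2 = (phiH f1).2.
  symmetry.
  apply: (@pi_phi Sigma (fH F2) (fadd F2) (fzero F2)
     (fun a h => fact F2 (phiV (CNode [::] a cid)).2 h) (fun f => (phiH f).2)).
  - exact: addA.
  - exact: addC.
  - exact: addI.
  - exact: add0.
  - by move=> s x y; apply: HD2.
  - by rewrite H0.
  - by move=> f g; rewrite Hcat.
  - move=> a ts.
    have -> : [:: Node a ts] = subst (CNode [::] a cid) ts by [].
    by rewrite Hsub.
  - exact: Hpi.
rewrite Hsub !Hcat !Hsub /= e addI.
congr (_, _).
- exact: HD1.
- by rewrite addI.
Qed.
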